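(* Let $I$ be an interval of a suitable and well-separated collection $\mathcal{I}$ (as in the context), regarded as a real interval $I=[a\pi/n,b\pi/n]\subseteq\mathbb{R}$ with integers $a<b$, and let $\theta_0\in\mathbb{R}$. (a) If $\theta_0\in I$, then $\frac43\le\int_I\frac{\sin(2n(\theta-\theta_0))}{\theta-\theta_0}\,d\theta\le4$. (b) If $\theta_0\notin I$, then $-1\le\int_I\frac{\sin(2n(\theta-\theta_0))}{\theta-\theta_0}\,d\theta\le2$.
   Context: $n$ is a positive integer and $\gamma$ is a constant with $0<\gamma\le 2^{-40}$. A collection $\mathcal{I}$ of pairwise disjoint intervals in $\mathbb{R}/2\pi\mathbb{Z}$ is suitable if (a) endpoints of each interval lie in $\frac{\pi}{n}\mathbb{Z}$; (b) $\mathcal{I}$ is invariant under $\theta\mapsto\pi+\theta$ and $\theta\mapsto\pi-\theta$; (c) $|\mathcal{I}|=4N$ for some integer $N\le\gamma n$. It is well-separated if moreover (d) $|I|\le6\pi/n$ for each $I\in\mathcal{I}$; (e) $d(I,J)\ge\pi/n$ for distinct $I,J\in\mathcal{I}$ (distance mod $2\pi$, infimum over points); (f) $\bigcup_{I\in\mathcal{I}}I$ is disjoint from $(\pi/2)\mathbb{Z}+[-100\pi/n,100\pi/n]$. At $\theta=\theta_0$ the integrand is interpreted as its continuous extension $2n$. *)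

(* Defs.v *)
From Stdlib Require Import Reals Lra Lia ZArith List.
From Coquelicot Require Import Coquelicot.
Open Scope R_scope.

(* A subset of R/2piZ is modelled as a 2pi-periodic predicate on R. *)
Definition arc (n : nat) (a b : Z) : R -> Prop :=
  fun th => exists k : Z,
    IZR a * PI / INR n <= th + 2 * PI * IZR k <= IZR b * PI / INR n.

Definition is_arc_of (n : nat) (I : R -> Prop) (a b : Z) : Prop :=
  (a < b)%Z /\ forall th, I th <-> arc n a b th.

(* A collection of intervals: a list of subsets of R/2piZ (its elements,
   listed once each; pairwise disjointness forces distinctness). *)
Definition suitable (n : nat) (gamma : R) (C : list (R -> Prop)) : Prop :=
  (forall I, In I C -> exists a b : Z, is_arc_of n I a b) /\
  (forall i j : nat, (i < length C)%nat -> (j < length C)%nat -> i <> j ->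
     forall th, ~ (nth i C (fun _ => False) th /\ nth j C (fun _ => False) th)) /\
  (forall I, In I C -> exists J, In J C /\ forall th, J th <-> I (th - PI)) /\
  (forall I, In I C -> exists J, In J C /\ forall th, J th <-> I (PI - th)) /\
  (exists N : nat, length C = (4 * N)%nat /\ INR N <= gamma * INR n).

Definition well_separated (n : nat) (gamma : R) (C : list (R -> Prop)) : Prop :=
  suitable n gamma C /\
  (forall I, In I C -> exists a b : Z, is_arc_of n I a b /\ (b - a <= 6)%Z) /\
  (forall i j : nat, (i < length C)%nat -> (j < length C)%nat -> i <> j ->
     forall x y, nth i C (fun _ => False) x -> nth j C (fun _ => False) y ->
     forall k : Z, PI / INR n <= Rabs (x - y + 2 * PI * IZR k)) /\
  (forall I, In I C -> forall th, I th ->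
     forall m : Z, 100 * PI / INR n < Rabs (th - IZR m * PI / 2)).

Definition kernel (n : nat) (th0 th : R) : R :=
  if Req_EM_T th th0 then 2 * INR n
  else sin (2 * INR n * (th - th0)) / (th - th0).

(* Main.v *)
Require Import Defs.
From Stdlib Require Import Reals ZArith List Lra Lia Machin.
From Coquelicot Require Import Coquelicot.
Open Scope R_scope.

Lemma PI_bounds : 3.14 <= PI <= 3.15.
Proof.
  pose proof (PI_2_3_7_ineq 1) as H.
  unfold tg_alt, PI_2_3_7_tg, Ratan_seq in H. simpl in H. lra.
Qed.

Definition sinc (x:R) := if Req_EM_T x 0 then 1 else sin x / x.

Lemma sinc_nz x : x <> 0 -> sinc x = sin x / x.
Proof. intros H; unfold sinc; destruct (Req_EM_T x 0); [contradiction|reflexivity]. Qed.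

Lemma sinc_even x : sinc (- x) = sinc x.
Proof.
  unfold sinc; destruct (Req_EM_T (-x) 0); destruct (Req_EM_T x 0); try lra.
  rewrite sin_neg; field; auto.
Qed.

Lemma sinc_cont x : continuous sinc x.
Proof.
  destruct (Req_EM_T x 0) as [->|Hx].
  - apply continuity_pt_filterlim.
    unfold continuity_pt, continue_in, limit1_in, limit_in.
    intros eps He. destruct (derivable_pt_lim_sin 0 eps He) as [d Hd].
    exists d. split; [apply cond_pos|].
    intros y [[_ Hy0] Hyd]. simpl in *. unfold R_dist in *.
    rewrite sinc_nz by auto. unfold sinc; destruct (Req_EM_T 0 0); [|lra].
    specialize (Hd y (not_eq_sym Hy0)). rewrite Rminus_0_r in Hyd.
    specialize (Hd Hyd). rewrite Rplus_0_l, sin_0, cos_0, Rminus_0_r in Hd. exact Hd.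
  - apply continuous_ext_loc with (g := fun y => sin y / y).
    + exists (mkposreal _ (Rabs_pos_lt x Hx)). intros y Hy.
      rewrite sinc_nz; auto. intros ->.
      cbn in Hy. unfold AbsRing_ball, abs, minus, plus, opp in Hy; simpl in Hy.
      rewrite Rplus_0_l, Rabs_Ropp in Hy. lra.
    + apply (ex_derive_continuous (fun y : R => sin y / y) x). auto_derive. auto.
Qed.

Lemma ex_sinc a b : ex_RInt sinc a b.
Proof. apply (ex_RInt_continuous (V:=R_CompleteNormedModule)). intros; apply sinc_cont. Qed.

Notation SI a b := (RInt sinc a b).

Lemma chas a b c : SI a b + SI b c = SI a c.
Proof. rewrite <- (RInt_Chasles sinc a b c) by apply ex_sinc. reflexivity. Qed.

Lemma refl a b : SI a b = SI (-b) (-a).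
Proof.
  pose proof (RInt_comp_lin sinc (-1) 0 a b (ex_sinc _ _)) as H.
  rewrite (RInt_ext _ (fun y => opp (sinc y))) in H.
  2:{ intros x _. replace (-1 * x + 0) with (- x) by ring. rewrite sinc_even. 
      unfold scal, opp; simpl. unfold mult; simpl. ring. }
  rewrite (RInt_opp (V:=R_CompleteNormedModule)) in H by apply ex_sinc.
  replace (-1 * a + 0) with (-a) in H by ring.
  replace (-1 * b + 0) with (-b) in H by ring.
  rewrite <- (opp_RInt_swap (V:=R_CompleteNormedModule) sinc (-b) (-a)) in H by apply ex_sinc.
  unfold opp in H; simpl in H. lra.
Qed.
Lemma RInt_deriv (F f : R -> R) a b :
  (forall x, Rmin a b <= x <= Rmax a b -> is_derive F x (f x)) ->
  (forall x, Rmin a b <= x <= Rmax a b -> continuous f x) ->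
  RInt f a b = F b - F a.
Proof.
  intros H1 H2. apply is_RInt_unique.
  apply (is_RInt_derive (V:=R_CompleteNormedModule) F f a b H1 H2).
Qed.
Lemma RInt_ge0 f a b : a <= b -> ex_RInt f a b -> (forall x, a < x < b -> 0 <= f x) -> 0 <= RInt f a b.
Proof.
  intros Hab He H.
  pose proof (RInt_le (fun _ => 0) f a b Hab (ex_RInt_const _ _ _) He H) as K.
  rewrite RInt_const in K. unfold scal in K; simpl in K; unfold mult in K; simpl in K. lra.
Qed.

Lemma F1 a b : 0 <= a -> a <= b -> b <= PI -> 0 <= SI a b.
Proof.
  intros. apply RInt_ge0; auto. apply ex_sinc.
  intros x Hx. rewrite sinc_nz by lra. apply Rdiv_le_0_compat; [|lra].
  apply sin_ge_0; lra.
Qed.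

Lemma F2 a b : PI <= a -> a <= b -> b <= 2 * PI -> SI a b <= 0.
Proof.
  intros. assert (0 <= RInt (fun x => - sinc x) a b).
  { apply RInt_ge0; auto. apply (ex_RInt_opp (V:=R_CompleteNormedModule)), ex_sinc.
    intros x Hx. rewrite sinc_nz by (pose proof PI_RGT_0; lra).
    assert (sin x <= 0) by (apply sin_le_0; lra).
    assert (0 < x) by (pose proof PI_RGT_0; lra).
    unfold Rdiv. assert (0 < / x) by (apply Rinv_0_lt_compat; lra). nra. }
  rewrite (RInt_opp (V:=R_CompleteNormedModule)) in H2 by apply ex_sinc.
  unfold opp in H2; simpl in H2. lra.
Qed.

Lemma F3 A B : 0 < A -> A <= B -> (cos A - 1) / A <= SI A B <= (cos A + 1) / A.
Proof.
  intros HA HAB.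
  assert (Hc : forall x, Rmin A B <= x <= Rmax A B -> 0 < x).
  { intros x Hx. rewrite Rmin_left in Hx by lra. lra. }
  split.
  - set (G := fun u => (1 - cos u) / u).
    set (g := fun u => sin u / u - (1 - cos u) / (u * u)).
    assert (E : RInt g A B = G B - G A).
    { apply RInt_deriv.
      - intros x Hx. specialize (Hc x Hx). unfold G, g. auto_derive. repeat split; intro; nra.
        field. intro; nra.
      - intros x Hx. specialize (Hc x Hx).
        apply (ex_derive_continuous g x). unfold g. auto_derive. repeat split; intro; nra. }
    assert (L : RInt g A B <= SI A B).
    { apply RInt_le; auto.
      - apply (ex_RInt_continuous (V:=R_CompleteNormedModule)). intros x Hx.
        specialize (Hc x Hx). apply (ex_derive_continuous g x). unfold g. auto_derive. repeat split; intro; nra.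
      - apply ex_sinc.
      - intros x Hx. rewrite sinc_nz by lra. unfold g.
        assert (0 <= (1 - cos x) / (x * x)).
        { apply Rdiv_le_0_compat. pose proof (COS_bound x); lra. nra. }
        lra. }
    assert (G B >= 0).
    { unfold G. apply Rle_ge, Rdiv_le_0_compat. pose proof (COS_bound B); lra. lra. }
    unfold G in *.
    assert ((cos A - 1) / A = - ((1 - cos A) / A)) by (field; intro; lra). lra.
  - set (G := fun u => - (cos u + 1) / u).
    set (g := fun u => sin u / u + (1 + cos u) / (u * u)).
    assert (E : RInt g A B = G B - G A).
    { apply RInt_deriv.
      - intros x Hx. specialize (Hc x Hx). unfold G, g. auto_derive. repeat split; intro; nra.
        field. intro; nra.
      - intros x Hx. specialize (Hc x Hx).
        apply (ex_derive_continuous g x). unfold g. auto_derive. repeat split; intro; nra. }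
    assert (L : SI A B <= RInt g A B).
    { apply RInt_le; auto.
      - apply ex_sinc.
      - apply (ex_RInt_continuous (V:=R_CompleteNormedModule)). intros x Hx.
        specialize (Hc x Hx). apply (ex_derive_continuous g x). unfold g. auto_derive. repeat split; intro; nra.
      - intros x Hx. rewrite sinc_nz by lra. unfold g.
        assert (0 <= (1 + cos x) / (x * x)).
        { apply Rdiv_le_0_compat. pose proof (COS_bound x); lra. nra. }
        lra. }
    assert (0 <= (cos B + 1) / B).
    { apply Rdiv_le_0_compat. pose proof (COS_bound B); lra. lra. }
    assert (G B = - ((cos B + 1) / B)) by (unfold G; field; intro; lra).
    assert (G A = - ((cos A + 1) / A)) by (unfold G; field; intro; lra).
    lra.
Qed.
Lemma sin_ub_eq x : sin_ub x = x - x^3/6 + x^5/120 - x^7/5040 + x^9/362880.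
Proof.
  unfold sin_ub, sin_approx, sin_term. cbv [sum_f_R0 Nat.mul Nat.add].
  rewrite !fact_simpl, !mult_INR. simpl INR. field.
Qed.
Lemma sin_lb_eq x : sin_lb x = x - x^3/6 + x^5/120 - x^7/5040.
Proof.
  unfold sin_lb, sin_approx, sin_term. cbv [sum_f_R0 Nat.mul Nat.add].
  rewrite !fact_simpl, !mult_INR. simpl INR. field.
Qed.
Lemma pw p k : 3.14 <= p <= 3.15 -> 3.14 ^ k <= p ^ k <= 3.15 ^ k.
Proof. intros; split; apply pow_incr; lra. Qed.
Lemma t p : 3.14 <= p <= 3.15 -> p - p^3/18 + p^5/600 - p^7/35280 + p^9/3265920 <= 2.
Proof. intros H. pose proof (pw p 3 H). pose proof (pw p 5 H). pose proof (pw p 7 H). pose proof (pw p 9 H). simpl in *. lra. Qed.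
Lemma t2 p : 3.14 <= p <= 3.15 -> 4/3 <= p - p^3/18 + p^5/600 - p^7/35280 - 3 / (2 * p).
Proof. intros H. pose proof (pw p 3 H). pose proof (pw p 5 H). pose proof (pw p 7 H).
 assert (3 / (2*p) <= 3/(2*3.14)). { apply Rmult_le_compat_l. lra. apply Rinv_le_contravar; lra. }
 simpl in *. lra. Qed.

Lemma F4 : SI 0 PI <= 2.
Proof.
  set (q := fun x => 1 - x^2/6 + x^4/120 - x^6/5040 + x^8/362880).
  set (Q := fun x => x - x^3/18 + x^5/600 - x^7/35280 + x^9/3265920).
  pose proof PI_bounds as HP.
  assert (E : RInt q 0 PI = Q PI - Q 0).
  { apply RInt_deriv.
    - intros x _. unfold Q, q. auto_derive. auto. field.
    - intros x _. apply (ex_derive_continuous q x). unfold q. auto_derive. auto. }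
  assert (L : SI 0 PI <= RInt q 0 PI).
  { apply RInt_le. lra. apply ex_sinc.
    apply (ex_RInt_continuous (V:=R_CompleteNormedModule)). intros x _.
    apply (ex_derive_continuous q x). unfold q. auto_derive. auto.
    intros x Hx. rewrite sinc_nz by lra.
    pose proof (SIN x ltac:(lra) ltac:(lra)) as [_ H]. rewrite sin_ub_eq in H.
    replace (q x) with ((x - x^3/6 + x^5/120 - x^7/5040 + x^9/362880) / x) by (unfold q; field; lra).
    unfold Rdiv. apply Rmult_le_compat_r; auto. apply Rlt_le, Rinv_0_lt_compat; lra. }
  assert (Q PI <= 2) by (unfold Q; apply t; lra).
  assert (Q 0 = 0) by (unfold Q; cbv beta; field). lra.
Qed.

Lemma F5 : 4/3 <= SI 0 (2 * PI).
Proof.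
  set (q := fun x => 1 - x^2/6 + x^4/120 - x^6/5040).
  set (Q := fun x => x - x^3/18 + x^5/600 - x^7/35280).
  pose proof PI_bounds as HP.
  assert (E : RInt q 0 PI = Q PI - Q 0).
  { apply RInt_deriv.
    - intros x _. unfold Q, q. auto_derive. auto. field.
    - intros x _. apply (ex_derive_continuous q x). unfold q. auto_derive. auto. }
  assert (L : RInt q 0 PI <= SI 0 PI).
  { apply RInt_le. lra.
    apply (ex_RInt_continuous (V:=R_CompleteNormedModule)). intros x _.
    apply (ex_derive_continuous q x). unfold q. auto_derive. auto.
    apply ex_sinc.
    intros x Hx. rewrite sinc_nz by lra.
    pose proof (SIN x ltac:(lra) ltac:(lra)) as [H _]. rewrite sin_lb_eq in H.
    replace (q x) with ((x - x^3/6 + x^5/120 - x^7/5040) / x) by (unfold q; field; lra).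
    unfold Rdiv. apply Rmult_le_compat_r; auto. apply Rlt_le, Rinv_0_lt_compat; lra. }
  set (w := fun u => sin u * (3 * PI - u) / (2 * PI ^ 2)).
  set (W := fun u => (- (3 * PI - u) * cos u - sin u) / (2 * PI ^ 2)).
  assert (E2 : RInt w PI (2 * PI) = W (2 * PI) - W PI).
  { apply RInt_deriv.
    - intros x _. unfold W, w. auto_derive. lra. field. lra.
    - intros x _. apply (ex_derive_continuous w x). unfold w. auto_derive. lra. }
  assert (L2 : RInt w PI (2 * PI) <= SI PI (2 * PI)).
  { apply RInt_le. lra.
    apply (ex_RInt_continuous (V:=R_CompleteNormedModule)). intros x _.
    apply (ex_derive_continuous w x). unfold w. auto_derive. lra.
    apply ex_sinc.
    intros x Hx. rewrite sinc_nz by lra.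
    assert (Hs : sin x <= 0) by (apply sin_le_0; lra).
    unfold w.
    assert (K : / x <= (3 * PI - x) / (2 * PI ^ 2)).
    { apply (Rmult_le_reg_l (x * (2 * PI^2))). nra.
      replace (x * (2 * PI ^ 2) * / x) with (2 * PI^2) by (field; lra).
      replace (x * (2 * PI ^ 2) * ((3 * PI - x) / (2 * PI ^ 2))) with (x * (3 * PI - x)) by (field; lra).
      nra. }
    unfold Rdiv in *. 
    replace (sin x * (3 * PI - x) * / (2 * PI ^ 2)) with (sin x * ((3 * PI - x) * / (2 * PI ^ 2))) by ring.
    apply Rmult_le_compat_neg_l; auto. }
  assert (W (2 * PI) - W PI = - 3 / (2 * PI)).
  { unfold W. rewrite cos_2PI, sin_2PI, cos_PI, sin_PI. field. lra. }
  assert (Q 0 = 0) by (unfold Q; cbv beta; field).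
  assert (4/3 <= Q PI - 3 / (2 * PI)) by (unfold Q; apply t2; lra).
  rewrite <- (chas 0 PI (2 * PI)).
  assert (- 3 / (2 * PI) = - (3 / (2 * PI))) by (field; lra).
  lra.
Qed.

Lemma Si_big u : PI <= u -> 4/3 <= SI 0 u.
Proof.
  intros Hu. pose proof PI_bounds. pose proof F5.
  destruct (Rle_lt_dec u (2 * PI)).
  - rewrite <- (chas 0 u (2 * PI)) in H0. pose proof (F2 u (2 * PI) Hu r ltac:(lra)). lra.
  - rewrite <- (chas 0 (2 * PI) u). pose proof (F3 (2 * PI) u ltac:(lra) ltac:(lra)) as [K _].
    rewrite cos_2PI, Rminus_diag in K. unfold Rdiv in K. rewrite Rmult_0_l in K. lra.
Qed.

Lemma Si_ge0 u : 0 <= u -> 0 <= SI 0 u.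
Proof.
  intros Hu. destruct (Rle_lt_dec u PI).
  - apply F1; lra.
  - pose proof (Si_big u ltac:(lra)). lra.
Qed.

Lemma Si_le u : 0 <= u -> SI 0 u <= 2.
Proof.
  intros Hu. pose proof PI_bounds. pose proof F4. destruct (Rle_lt_dec u PI).
  - rewrite <- (chas 0 u PI) in H0. pose proof (F1 u PI Hu r ltac:(lra)). lra.
  - rewrite <- (chas 0 PI u). pose proof (F3 PI u ltac:(lra) ltac:(lra)) as [_ K].
    rewrite cos_PI in K. replace (-1 + 1) with 0 in K by ring. unfold Rdiv in K. rewrite Rmult_0_l in K. lra.
Qed.

Lemma P1 A B : A <= 0 -> 0 <= B -> 2 * PI <= B - A -> 4/3 <= SI A B <= 4.
Proof.
  intros HA HB HAB. rewrite <- (chas A 0 B). rewrite (refl A 0), Ropp_0.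
  pose proof (Si_le (-A) ltac:(lra)). pose proof (Si_le B HB).
  pose proof (Si_ge0 (-A) ltac:(lra)). pose proof (Si_ge0 B HB).
  destruct (Rle_lt_dec PI B).
  - pose proof (Si_big B r). lra.
  - pose proof (Si_big (-A) ltac:(lra)). lra.
Qed.

Lemma P2pos A B : 0 < A -> A + 2 * PI <= B -> -1 <= SI A B <= 2.
Proof.
  intros HA HAB. pose proof PI_bounds.
  destruct (Rle_lt_dec PI A).
  - pose proof (F3 A B HA ltac:(lra)) as [K1 K2]. pose proof (COS_bound A).
    assert (Hi : 0 < / A) by (apply Rinv_0_lt_compat; lra).
    assert (Hi2 : A * / A = 1) by (field; lra).
    unfold Rdiv in *. split; nra.
  - rewrite <- (chas A PI B).
    pose proof (F1 A PI ltac:(lra) ltac:(lra) ltac:(lra)).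
    pose proof (F1 0 A ltac:(lra) ltac:(lra) ltac:(lra)).
    pose proof (chas 0 A PI). pose proof F4.
    pose proof (F3 PI B ltac:(lra) ltac:(lra)) as [K1 K2].
    rewrite cos_PI in K1, K2.
    replace (-1 + 1) with 0 in K2 by ring. unfold Rdiv in K2. rewrite Rmult_0_l in K2.
    assert (Hi : 0 < / PI) by (apply Rinv_0_lt_compat; lra).
    assert (Hi2 : PI * / PI = 1) by (field; lra).
    unfold Rdiv in K1. split; nra.
Qed.

Lemma P2 A B : (0 < A \/ B < 0) -> 2 * PI <= B - A -> -1 <= SI A B <= 2.
Proof.
  intros [H|H] HAB.
  - apply P2pos; lra.
  - rewrite refl. apply P2pos; lra.
Qed.

Lemma kernel_eq n th0 th : (0 < n)%nat ->
  kernel n th0 th = scal (2 * INR n) (sinc (2 * INR n * th + - (2 * INR n * th0))).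
Proof.
  intros Hn. assert (HN : 0 < INR n) by (apply lt_0_INR; lia).
  unfold scal; simpl; unfold mult; simpl.
  unfold kernel. destruct (Req_EM_T th th0) as [->|Hne].
  - replace (2 * INR n * th0 + - (2 * INR n * th0)) with 0 by ring.
    unfold sinc; destruct (Req_EM_T 0 0); [ring|lra].
  - rewrite sinc_nz.
    + replace (2 * INR n * th + - (2 * INR n * th0)) with (2 * INR n * (th - th0)) by ring.
      field. split; intro; [lra|]. apply Hne; lra.
    + intro K. apply Hne. nra.
Qed.

Theorem lemma5p8 (n : nat) (gamma : R) (C : list (R -> Prop))
  (I : R -> Prop) (a b : Z) (th0 : R) :
  (0 < n)%nat ->
  0 < gamma -> gamma <= / 2 ^ 40 ->
  well_separated n gamma C ->
  In I C ->
  is_arc_of n I a b ->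
  let lo := IZR a * PI / INR n in
  let hi := IZR b * PI / INR n in
  (lo <= th0 <= hi ->
     4 / 3 <= RInt (kernel n th0) lo hi <= 4) /\
  (~ (lo <= th0 <= hi) ->
     -1 <= RInt (kernel n th0) lo hi <= 2).
Proof.
  intros Hn _ _ _ _ [Hab _] lo hi.
  assert (HN : 0 < INR n) by (apply lt_0_INR; lia).
  pose proof PI_RGT_0 as HP.
  assert (Hba : IZR a + 1 <= IZR b).
  { rewrite <- plus_IZR. apply IZR_le. lia. }
  set (u := 2 * INR n). set (v := - (2 * INR n * th0)).
  assert (E : RInt (kernel n th0) lo hi = SI (u * lo + v) (u * hi + v)).
  { rewrite <- RInt_comp_lin by apply ex_sinc.
    apply RInt_ext. intros x _. apply kernel_eq; auto. }
  set (A := u * lo + v) in E. set (B := u * hi + v) in E.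
  assert (EA : A = 2 * IZR a * PI - 2 * INR n * th0).
  { unfold A, u, v, lo. field. lra. }
  assert (EB : B = 2 * IZR b * PI - 2 * INR n * th0).
  { unfold B, u, v, hi. field. lra. }
  assert (HBA : 2 * PI <= B - A).
  { rewrite EA, EB. nra. }
  assert (Klo : lo * INR n = IZR a * PI) by (unfold lo; field; lra).
  assert (Khi : hi * INR n = IZR b * PI) by (unfold hi; field; lra).
  rewrite E. split.
  - intros [H1 H2]. apply P1; auto.
    + rewrite EA. nra.
    + rewrite EB. nra.
  - intros H. apply P2; auto.
    destruct (Rle_lt_dec lo th0).
    + right. assert (hi < th0) by (apply Rnot_le_lt; intro; apply H; lra).
      rewrite EB. nra.
    + left. rewrite EA. nra.
Qed.
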